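(* Let $X$ be a finite $T_0$-space. If $x_i\in X$ is a weak beat point, then $\det(X_M)=-\det\big((X\setminus\{x_i\})_M\big)$.
   Context: A finite $T_0$-space is identified with a finite poset via $x\le y$ iff $U_x\subseteq U_y$, where $U_x$ is the minimal open set containing $x$; subsets carry the induced order/subspace topology. For a labelling $X=\{x_1,\dots,x_n\}$, $X_M=(x_{i,j})$ is the $n\times n$ matrix with $x_{i,j}=0$ if $x_i\le x_j$ and $x_{i,j}=1$ otherwise; its determinant does not depend on the labelling. Let $\hat U_x=\{y: y<x\}$ and $\hat F_x=\{y:y>x\}$. A point $x$ is a down weak beat point if $\hat U_x$ is contractible, an up weak beat point if $\hat F_x$ is contractible, and a weak beat point if it is either. *)

(* Defs.v *)
From mathcomp Require Import all_boot all_order all_algebra.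
From Stdlib Require Import Reals.
Set Implicit Arguments.
Unset Strict Implicit.
Unset Printing Implicit Defensive.
Import Order.Theory GRing.Theory.

(* A finite T0-space is a finite poset (T : finPOrderType d); x <= y iff U_x ⊆ U_y.
   Open sets of the subspace S ⊆ T are exactly the down-closed subsets of S
   (the topology induced from the Alexandrov/down-set topology).  *)
Section FiniteSpaces.
Context {d : Order.disp_t} {T : finPOrderType d}.
Local Open Scope order_scope.

Definition openIn (S V : {set T}) : Prop :=
  V \subset S /\ forall x y, y \in S -> x \in V -> y <= x -> y \in V.

(* H : [0,1] × S -> S is continuous, where [0,1] ⊆ R carries the Euclidean
   topology and [0,1] × S the product topology: the preimage of every open V
   of S is open, i.e. each of its points (t,s) has a basic neighbourhood
   ((t-e,t+e) ∩ [0,1]) × U_s (U_s = minimal open set of s in S) inside it. *)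
Definition homotopy_continuous (S : {set T}) (H : R -> T -> T) : Prop :=
  forall V, openIn S V ->
  forall t s, (Rle 0 t /\ Rle t 1) -> s \in S -> H t s \in V ->
  exists e : R, Rlt 0 e /\
    forall t' s', (Rle 0 t' /\ Rle t' 1) -> Rlt (Rabs (Rminus t' t)) e -> s' \in S -> s' <= s ->
      H t' s' \in V.

Definition contractible (S : {set T}) : Prop :=
  exists (y0 : T) (H : R -> T -> T),
    y0 \in S /\
    (forall t s, (Rle 0 t /\ Rle t 1) -> s \in S -> H t s \in S) /\
    homotopy_continuous S H /\
    (forall s, s \in S -> H R0 s = s) /\
    (forall s, s \in S -> H R1 s = y0).

Definition hatU (x : T) : {set T} := [set y | y < x].
Definition hatF (x : T) : {set T} := [set y | x < y].

Definition down_weak_beat_point (x : T) : Prop := contractible (hatU x).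
Definition up_weak_beat_point (x : T) : Prop := contractible (hatF x).
Definition weak_beat_point (x : T) : Prop :=
  down_weak_beat_point x \/ up_weak_beat_point x.

Definition space_matrix (A : {set T}) : 'M[int]_#|A| :=
  \matrix_(i, j) (if (enum_val i <= enum_val j) then (0 : int) else (1 : int)).

Definition space_det (A : {set T}) : int := \det (space_matrix A).

End FiniteSpaces.

(* Main.v *)
Require Import Defs.
From Stdlib Require Import Reals Lra Classical.
From mathcomp Require Import all_boot all_order all_algebra all_fingroup.
Set Implicit Arguments.
Unset Strict Implicit.
Unset Printing Implicit Defensive.
Import Order.Theory GRing.Theory.

Section Chains.
Context {d : Order.disp_t} {T : finPOrderType d}.
Local Open Scope order_scope.

Definition chainb (c : {set T}) : bool :=
  [forall x in c, forall y in c, (x <= y) || (y <= x)].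

Definition ee (B : {set T}) : int :=
  (\sum_(c : {set T} | c \subset B) (if chainb c then (-1) ^+ #|c| else 0))%R.

Lemma split_sum (B : {set T}) (r : T) (F : {set T} -> int) : r \in B ->
  (\sum_(c : {set T} | c \subset B) F c = \sum_(c : {set T} | c \subset B :\ r) (F c + F (r |: c)))%R.
Proof.
move=> rB.
rewrite big_split /= [LHS](bigID (fun c : {set T} => r \in c)) /= addrC; congr (_ + _)%R.
  apply: eq_bigl => c; rewrite subsetD1; case: (r \in c); by rewrite ?andbF ?andbT.
rewrite (reindex_onto (fun c => r |: c) (fun c => c :\ r)) /=; last first.
  by move=> c /andP[_ rc]; rewrite setD1K.
apply: eq_bigl => c; rewrite setU11 andbT subUset sub1set rB /=.
rewrite subsetD1; case rc: (r \in c); last by rewrite setU1K ?rc // eqxx.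
rewrite andbF; apply/negbTE/negP => /andP[_ /eqP E].
by move: rc; rewrite -E setD11.
Qed.

Lemma chainbP (c : {set T}) :
  reflect (forall x y, x \in c -> y \in c -> (x <= y) || (y <= x)) (chainb c).
Proof.
apply: (iffP forall_inP) => H.
  by move=> x y xc yc; move/forall_inP: (H x xc) => /(_ y yc).
by move=> x xc; apply/forall_inP => y yc; apply: H.
Qed.

Lemma chainbU1 (c : {set T}) r :
  chainb (r |: c) = chainb c && [forall y in c, (r <= y) || (y <= r)].
Proof.
apply/chainbP/andP.
  move=> H; split.
    by apply/chainbP => x y xc yc; apply: H; rewrite in_setU1 ?xc ?yc orbT.
  by apply/forall_inP => y yc; apply: H; rewrite in_setU1 ?yc ?eqxx ?orbT.
move=> [/chainbP H /forall_inP H'] x y; rewrite !in_setU1.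
case/orP=> [/eqP->|xc]; case/orP=> [/eqP->|yc]; rewrite ?lexx //.
- exact: H'.
- by rewrite orbC; apply: H'.
- exact: H.
Qed.

Lemma chainbU (a b : {set T}) : (forall x y, x \in a -> y \in b -> x <= y) ->
  chainb (a :|: b) = chainb a && chainb b.
Proof.
move=> Hab; apply/chainbP/andP.
  move=> H; split; apply/chainbP => x y xc yc; apply: H; by rewrite in_setU ?xc ?yc ?orbT.
move=> [/chainbP Ha /chainbP Hb] x y; rewrite !in_setU.
case/orP=> xc; case/orP=> yc.
- exact: Ha.
- by rewrite Hab.
- by rewrite orbC Hab.
- exact: Hb.
Qed.

Lemma ee_cone (B : {set T}) r : r \in B -> (forall y, y \in B -> (r <= y) || (y <= r)) ->
  ee B = 0%R.
Proof.
move=> rB Hr; rewrite /ee (split_sum _ rB); apply: big1 => c cB.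
have rc : r \notin c by move: cB; rewrite subsetD1 => /andP[].
rewrite chainbU1.
have -> : [forall y in c, (r <= y) || (y <= r)].
  apply/forall_inP => y yc; apply: Hr.
  by move: cB; rewrite subsetD1 => /andP[/subsetP /(_ y yc)].
rewrite andbT cardsU1 rc /=; case: (chainb c); last by rewrite addr0.
by rewrite add1n exprS mulN1r addrN.
Qed.

Lemma sum_union (U F : {set T}) (G : {set T} -> int) : [disjoint U & F] ->
  (\sum_(c : {set T} | c \subset U :|: F) G c =
   \sum_(a : {set T} | a \subset U) \sum_(b : {set T} | b \subset F) G (a :|: b))%R.
Proof.
move=> dUF.
rewrite pair_big_dep /=.
rewrite (reindex_onto (fun p : {set T} * {set T} => p.1 :|: p.2)
                      (fun c => (c :&: U, c :&: F))) /=; last first.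
  by move=> c cUF; rewrite -setIUr; apply/setIidPl.
apply: eq_bigl => [[a b]] /=; apply/idP/idP.
  by move/andP=> [_ /eqP [<- <-]]; rewrite !subsetIr.
move/andP=> [aU bF]; rewrite setUSS //=; apply/eqP; congr pair; apply/setP => x;
  rewrite !inE; case xa: (x \in a); case xb: (x \in b) => //=.
all: first [ by rewrite (subsetP aU) | by rewrite (subsetP bF)
  | by apply: negbTE; apply/negP => xU; move: (disjointFr dUF xU); rewrite (subsetP bF)
  | by apply: negbTE; apply/negP => xF; move: (disjointFl dUF xF); rewrite (subsetP aU) ].
Qed.

Definition gch (c : {set T}) : int := (if chainb c then (-1) ^+ #|c| else 0)%R.
Definition lowr (A : {set T}) (p : T) : {set T} := [set y in A | y < p].
Definition uppr (A : {set T}) (p : T) : {set T} := [set y in A | p < y].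

Lemma ee_delete (A : {set T}) p : p \in A ->
  ee A = (ee (A :\ p) - ee (lowr A p) * ee (uppr A p))%R.
Proof.
move=> pA; rewrite {1}/ee (split_sum _ pA) big_split /=; congr (_ + _)%R.
have dLU : [disjoint lowr A p & uppr A p].
  rewrite -setI_eq0; apply/eqP/setP => y; rewrite !inE.
  by case: (y < p) (p < y) (lt_asym y p) => [] []; rewrite ?andbF.
have sL : lowr A p :|: uppr A p \subset A :\ p.
  apply/subsetP => y; rewrite !inE => /orP[] /andP[yA ylt]; rewrite yA andbT.
    by rewrite lt_eqF.
  by rewrite gt_eqF.
transitivity (\sum_(c : {set T} | c \subset lowr A p :|: uppr A p) - gch c)%R; last first.
  rewrite sumrN sum_union // /ee big_distrlr /=; congr (- _)%R.
  apply: eq_bigr => a aL; apply: eq_bigr => b bU.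
  rewrite /gch chainbU; last first.
    move=> x y xa ya; move: (subsetP aL x xa) (subsetP bU y ya); rewrite !inE.
    by move=> /andP[_ xp] /andP[_ py]; apply: ltW; apply: lt_trans py.
  have ab0 : a :&: b = set0.
    apply: disjoint_setI0; exact: (disjointW aL bU dLU).
  have -> : #|a :|: b| = (#|a| + #|b|)%N.
    by rewrite -cardsUI ab0 cards0 addn0.
  by case: (chainb a); case: (chainb b); rewrite ?mulr0 ?mul0r // exprD.
rewrite [RHS](eq_bigl (fun c : {set T} => (c \subset A :\ p) && (c \subset lowr A p :|: uppr A p))); last first.
  move=> c; apply/idP/andP => [H|[]//]; split=> //; exact: subset_trans H sL.
rewrite [RHS]big_mkcondr /=; apply: eq_bigr => c cA.
have pc : p \notin c by move: cA; rewrite subsetD1 => /andP[].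

rewrite chainbU1 cardsU1 pc /gch.
have -> : [forall y in c, (p <= y) || (y <= p)] = (c \subset lowr A p :|: uppr A p).
  apply/forall_inP/subsetP => H y yc.
    move: (subsetP cA y yc); rewrite !inE => /andP[ypne yA]; rewrite yA /=.
    have pny : p != y by rewrite eq_sym.
    by case/orP: (H y yc) => le; rewrite !lt_def le ypne pny /= ?orbT.
  by move: (H y yc); rewrite !inE => /orP[] /andP[_ /ltW ->]; rewrite ?orbT.
case: (chainb c); case: (c \subset _) => //=.
  by rewrite add1n exprS mulN1r.
Qed.

Lemma exists_max (Q : {set T}) x0 : x0 \in Q ->
  exists2 z, z \in Q & forall y, y \in Q -> ~~ (z < y).
Proof.
move=> x0Q.
case: (arg_minnP (fun z => #|[set y in Q | z < y]|) x0Q) => z zQ Hmin.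
exists z => // y yQ; apply/negP => zy.
have : [set w in Q | y < w] \proper [set w in Q | z < w].
  apply/properP; split.
    by apply/subsetP => w; rewrite !inE => /andP[-> /(lt_trans zy) ->].
  by exists y; rewrite !inE ?yQ ?zy // ltxx.
by move/proper_card; rewrite ltnNge Hmin.
Qed.

Lemma exists_min (Q : {set T}) x0 : x0 \in Q ->
  exists2 z, z \in Q & forall y, y \in Q -> ~~ (y < z).
Proof.
move=> x0Q.
case: (arg_minnP (fun z => #|[set y in Q | y < z]|) x0Q) => z zQ Hmin.
exists z => // y yQ; apply/negP => zy.
have : [set w in Q | w < y] \proper [set w in Q | w < z].
  apply/properP; split.
    by apply/subsetP => w; rewrite !inE => /andP[-> /lt_trans ->].
  by exists y; rewrite !inE ?yQ ?zy // ltxx.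
by move/proper_card; rewrite ltnNge Hmin.
Qed.

Lemma ee0 : ee set0 = 1%R.
Proof.
rewrite /ee (big_pred1 set0) ?cards0 ?expr0 //.
  by rewrite /chainb; case: forall_inP => // [[]] x; rewrite inE.
by move=> c; rewrite subset0.
Qed.

Lemma ee_rec (B : {set T}) :
  ee B = (1 - \sum_(p in B) ee (uppr B p))%R.
Proof.
move: {2}#|B| (leqnn #|B|) => n; elim: n B => [|n IH] B.
  rewrite leqn0 cards_eq0 => /eqP ->; rewrite ee0 big_set0 subr0 //.
move=> Bn; case: (set_0Vmem B) => [->|[x0 x0B]].
  by rewrite ee0 big_set0 subr0.
case: (exists_min x0B) => p pB pmin.
rewrite (ee_delete pB).
have -> : lowr B p = set0.
  by apply/setP => y; rewrite !inE; apply/negbTE/negP => /andP[yB]; apply/negP; apply: pmin.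
rewrite ee0 mul1r IH; last by rewrite -ltnS (leq_trans _ Bn) // (cardsD1 p B) pB.
rewrite [in RHS](bigD1 p) //= [(ee (uppr B p) + _)%R]addrC opprD addrA.
congr (_ - _ - _)%R.
rewrite [RHS](eq_bigl (fun q => q \in B :\ p)); last first.
  by move=> q; rewrite !inE andbC.
apply: eq_bigr => q; rewrite !inE => /andP[qp qB]; congr ee; apply/setP => y; rewrite !inE.
case: (y =P p) => [->|] //=.
by rewrite pB /=; apply/esym/negbTE; exact: pmin.
Qed.

End Chains.

Section Rank1.
Local Open Scope ring_scope.
Lemma det_rank1 (Rg : comNzRingType) n (w : 'cV[Rg]_n) (v : 'rV[Rg]_n) :
  \det (1%:M - w *m v) = 1 - (v *m w) 0 0.
Proof.
pose P := block_mx (1%:M : 'M[Rg]_1) v w 1%:M.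
have E1 : P = block_mx 1%:M 0 w 1%:M *m block_mx 1%:M v 0 (1%:M - w *m v).
  rewrite mulmx_block !mul0mx !mulmx0 !mul1mx mulmx1 !addr0 addrC subrK //.
have E2 : P = block_mx (1%:M - v *m w) v 0 1%:M *m block_mx 1%:M 0 w 1%:M.
  by rewrite mulmx_block !mulmx1 !mul0mx !mulmx0 !mul1mx ?add0r ?addr0 subrK.
have D1 : \det P = \det (1%:M - w *m v).
  by rewrite E1 det_mulmx det_lblock det_ublock !det1 !mul1r.
have D2 : \det P = 1 - (v *m w) 0 0.
  by rewrite E2 det_mulmx det_lblock det_ublock !det1 !mulr1 det_mx11 !mxE eqxx.
by rewrite -D1 D2.
Qed.

End Rank1.


Section Det.
Context {d : Order.disp_t} {T : finPOrderType d}.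
Local Open Scope order_scope.

Definition zeta (A : {set T}) : 'M[int]_#|A| :=
  \matrix_(i, j) (if (enum_val i <= enum_val j) then (1 : int) else (0 : int)).

Lemma perm_le_id (A : {set T}) (s : 'S_(#|A|)) :
  (forall i, enum_val i <= enum_val (s i)) -> s = 1%g.
Proof.
move=> H; apply/permP => i; rewrite perm1.
have Hk : forall k j, enum_val j <= enum_val ((s ^+ k)%g j).
  elim=> [|k IH] j; first by rewrite expg0 perm1.
  by rewrite expgSr permM; apply: le_trans (IH j) (H _).
have ord := order_gt0 s.
have : enum_val (s i) <= enum_val i.
  have := Hk (#[s].-1)%g (s i); rewrite -permM -expgS prednK //.
  by rewrite expg_order perm1.
move=> le1; apply: enum_val_inj; apply: le_anti; rewrite le1 H //.
Qed.

Lemma det_zeta (A : {set T}) : (\det (zeta A) = 1)%R.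
Proof.
rewrite /determinant (bigD1 1%g) //= odd_perm1 expr0 mul1r.
rewrite big1 => [|i _]; last by rewrite perm1 mxE lexx.
rewrite big1 ?addr0 // => s s1.
case: (boolP [forall i, enum_val i <= enum_val (s i)]).
  by move/forallP => H; rewrite (perm_le_id H) eqxx in s1.
rewrite negb_forall => /existsP [i Hi].
by rewrite (bigD1 i) //= mxE (negbTE Hi) mul0r mulr0.
Qed.


Lemma space_det_ee (A : {set T}) : space_det A = ((-1) ^+ #|A| * ee A)%R.
Proof.
pose w : 'cV[int]_#|A| := (\col_j ee (uppr A (enum_val j)))%R.
pose u : 'rV[int]_#|A| := const_mx 1%R.
have Zw : (zeta A *m w = const_mx 1)%R.
  apply/matrixP => i k; rewrite !mxE.
  transitivity (\sum_(p in A) (if (enum_val i <= p)%O then ee (uppr A p) else 0))%R.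
    rewrite [RHS]big_enum_val /=; apply: eq_bigr => j _; rewrite !mxE.
    by case: ifP => _; rewrite ?mul1r ?mul0r.
  rewrite -big_mkcondr /=.
  set C := [set y in A | enum_val i <= y].
  transitivity (\sum_(p in C) ee (uppr C p))%R.
    apply: eq_big => p; first by rewrite inE.
    move=> /andP[pA ip]; congr ee; apply/setP=> y; rewrite !inE.
    case: (boolP (p < y)) => py; rewrite ?andbF ?andbT //.
    by rewrite (le_trans ip (ltW py)) andbT.
  have := ee_rec C; rewrite (@ee_cone _ _ C (enum_val i)).
  - by move/eqP; rewrite eq_sym subr_eq0 => /eqP.
  - by rewrite inE enum_valP lexx.
  - by move=> y; rewrite inE => /andP[_ ->].
have M : space_matrix A = (- (zeta A *m (1%:M - w *m u)))%R.
  rewrite mulmxBr mulmx1 mulmxA Zw; apply/matrixP => i j; rewrite !mxE.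
  rewrite big_ord1 !mxE mul1r; case: ifP => _ //.
rewrite /space_det M -scaleN1r detZ det_mulmx det_zeta det_rank1 mul1r.
congr (_ * _)%R; rewrite ee_rec; congr (_ - _)%R; rewrite mxE [RHS]big_enum_val /=.
by apply: eq_bigr => j _; rewrite !mxE mul1r.
Qed.

End Det.


Section Fix.
Context {d : Order.disp_t} {T : finPOrderType d}.
Local Open Scope order_scope.

Definition fixS (S : {set T}) (f : T -> T) : {set T} := [set s in S | f s == s].
Definition okmap (S : {set T}) (f : T -> T) : Prop :=
  (forall s, s \in S -> f s \in S) /\
  (forall a b, a \in S -> b \in S -> a <= b -> f a <= f b).

Lemma fixS_eq (S : {set T}) (f g : T -> T) : (forall s, s \in S -> (f s == s) = (g s == s)) -> fixS S f = fixS S g.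
Proof. by move=> H; apply/setP => s; rewrite !inE; case sS: (s \in S) => //=; apply: H. Qed.

Lemma elem_step (S : {set T}) (f g : T -> T) p : okmap S f -> okmap S g -> (forall s, s \in S -> f s <= g s) ->
  p \in S -> (forall s, s \in S -> s != p -> f s = g s) ->
  ee (fixS S f) = ee (fixS S g).
Proof.
move=> [fS fm] [gS gm] fg pS fgp.
case: (f p =P g p) => [fgpe|fgpn].
  congr ee; apply: fixS_eq => s sS; case: (s =P p) => [->|/eqP sp]; first by rewrite fgpe.
  by rewrite fgp.
case: (f p =P p) => [fpp|fpn].
  have pF : p \in fixS S f by rewrite inE pS fpp eqxx.
  have -> : fixS S g = fixS S f :\ p.
    apply/setP => s; rewrite !inE; case: (s =P p) => [->|/eqP sp] /=.
      by rewrite pS /=; apply/negP => /eqP E; apply: fgpn; rewrite E fpp.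
    by case sS: (s \in S) => //=; rewrite fgp.
  rewrite (ee_delete pF).
  suff -> : ee (uppr (fixS S f) p) = 0%R by rewrite mulr0 subr0.
  have ple : p <= g p by rewrite -{1}fpp fg.
  have plt : p < g p by rewrite lt_neqAle ple andbT; apply/eqP => E; apply: fgpn; rewrite fpp.
  pose Q := [set z in S | (g p <= z) && (z <= g z) &&
                          [forall y in S, (g y == y) && (g p <= y) ==> (z <= y)]].
  have gpQ : g p \in Q.
    rewrite inE gS //= lexx /= gm ?gS //=.
    by apply/forall_inP => y yS; apply/implyP => /andP[].
  case: (exists_max gpQ) => z zQ zmax.
  move: (zQ); rewrite inE => /and3P[zS /andP[gpz zgz] /forall_inP zmin].
  have gzQ : g z \in Q.
    rewrite inE gS //= (le_trans gpz zgz) /= gm ?gS //=.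
    apply/forall_inP => y yS; apply/implyP => /andP[/eqP gy gpy].
    rewrite -gy gm //; move: (zmin y yS); rewrite gy gpy eqxx /=.
    by [].
  have gzz : g z = z.
    by apply/eqP; move: (zmax _ gzQ); rewrite lt_def zgz andbT negbK.
  have pz : p < z by apply: lt_le_trans plt gpz.
  apply: (@ee_cone _ _ _ z).
    rewrite !inE zS pz andbT /= fgp ?gzz //; by rewrite gt_eqF.
  move=> y; rewrite !inE => /andP[/andP[yS /eqP fy] py].
  have gy : g y = y by rewrite -fgp ?fy // gt_eqF.
  move: (zmin y yS); rewrite gy eqxx /= -gy (gm p y) ?pS ?yS ?(ltW py) //=.
  by move=> ->.
case: (g p =P p) => [gpp|gpn]; last first.
  congr ee; apply: fixS_eq => s sS; case: (s =P p) => [->|/eqP sp].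
    by apply/eqP/eqP.
  by rewrite fgp.
have pG : p \in fixS S g by rewrite inE pS gpp eqxx.
have -> : fixS S f = fixS S g :\ p.
  apply/setP => s; rewrite !inE; case: (s =P p) => [->|/eqP sp] /=.
    by rewrite pS /=; apply/negP => /eqP.
  by case sS: (s \in S) => //=; rewrite fgp.
rewrite (ee_delete pG).
suff -> : ee (lowr (fixS S g) p) = 0%R by rewrite mul0r subr0.
have ple : f p <= p by rewrite -{2}gpp fg.
have plt : f p < p by rewrite lt_neqAle ple andbT; apply/eqP.
pose Q := [set z in S | (z <= f p) && (f z <= z) &&
                        [forall y in S, (f y == y) && (y <= f p) ==> (y <= z)]].
have fpQ : f p \in Q.
  rewrite inE fS //= lexx /= fm ?fS //=.
  by apply/forall_inP => y yS; apply/implyP => /andP[].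
case: (exists_min fpQ) => z zQ zmin.
move: (zQ); rewrite inE => /and3P[zS /andP[zfp fzz] /forall_inP zmax].
have fzQ : f z \in Q.
  rewrite inE fS //= (le_trans fzz zfp) /= fm ?fS //=.
  apply/forall_inP => y yS; apply/implyP => /andP[/eqP fy yfp].
  rewrite -fy fm //; move: (zmax y yS); rewrite fy yfp eqxx /=.
  by [].
have fz : f z = z.
  by apply/eqP; move: (zmin _ fzQ); rewrite lt_def fzz andbT negbK eq_sym.
have zp : z < p by apply: le_lt_trans zfp plt.
apply: (@ee_cone _ _ _ z).
  rewrite !inE zS zp andbT /= -fgp ?fz //; by rewrite lt_eqF.
move=> y; rewrite !inE => /andP[/andP[yS /eqP gy] yp].
have fy : f y = y by rewrite fgp ?gy // lt_eqF.
move: (zmax y yS); rewrite fy eqxx /= -{1}fy (fm y p) ?pS ?yS ?(ltW yp) //=.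
by move=> ->; rewrite orbT.
Qed.

Lemma key_le (S : {set T}) (f g : T -> T) : okmap S f -> okmap S g ->
  (forall s, s \in S -> f s <= g s) -> ee (fixS S f) = ee (fixS S g).
Proof.
move: {2}#|[set s in S | f s != g s]| (leqnn #|[set s in S | f s != g s]|) => k.
elim: k f => [|k IH] f.
  rewrite leqn0 cards_eq0 => /eqP D0 _ _ _; congr ee; apply: fixS_eq => s sS.
  have : s \notin [set s in S | f s != g s] by rewrite D0 inE.
  by rewrite inE sS negbK => /eqP ->.
move=> Dk [fS fm] [gS gm] fg.
case: (set_0Vmem [set s in S | f s != g s]) => [D0|[x0 x0D]].
  congr ee; apply: fixS_eq => s sS.
  have : s \notin [set s in S | f s != g s] by rewrite D0 inE.
  by rewrite inE sS negbK => /eqP ->.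
case: (exists_max x0D) => p; rewrite inE => /andP[pS fgp] pmax.
have offp : forall b, b \in S -> p < b -> f b = g b.
  move=> b bS pb; apply/eqP; apply/negPn/negP => H.
  by move: (pmax b); rewrite inE bS H pb => /(_ isT).
pose f' := fun x => if x == p then g p else f x.
have ok' : okmap S f'.
  split.
    by move=> s sS; rewrite /f'; case: (s == p); [apply: gS | apply: fS].
  move=> a b aS bS ab; rewrite /f'.
  case: (a =P p) => [ap|/eqP ap]; case: (b =P p) => [bp|/eqP bp].
  - by rewrite lexx.
  - rewrite offp //; first by apply: gm => //; rewrite -ap.
    by rewrite lt_neqAle eq_sym bp -ap ab.
  - by apply: le_trans (fg p pS); rewrite -bp fm.
  - exact: fm.
have ff' : forall s, s \in S -> f s <= f' s.
  by move=> s sS; rewrite /f'; case: (s =P p) => [->|]; rewrite ?fg ?lexx.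
have f'g : forall s, s \in S -> f' s <= g s.
  by move=> s sS; rewrite /f'; case: (s =P p) => [->|]; rewrite ?fg ?lexx.
rewrite (@elem_step S f f' p) //; last first.
  by move=> s sS sp; rewrite /f' (negbTE sp).
apply: IH => //.
have -> : [set s in S | f' s != g s] = [set s in S | f s != g s] :\ p.
  apply/setP => s; rewrite !inE /f'; case: (s =P p) => [->|] //=.
  by rewrite eqxx andbF.
by move: Dk; rewrite (cardsD1 p [set s in S | f s != g s]) inE pS fgp.
Qed.

End Fix.

Section LocConst.
Local Open Scope R_scope.
Lemma loc_const_01 (X : Type) (I : R -> X) :
  (forall t, 0 <= t <= 1 -> exists e, 0 < e /\
     forall t', 0 <= t' <= 1 -> Rabs (t' - t) < e -> I t' = I t) ->
  I 1 = I 0.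
Proof.
intros Hloc.
set (E := fun t => 0 <= t <= 1 /\ forall u, 0 <= u <= t -> I u = I 0).
assert (E0 : E 0).
{ split; [lra|]. intros u Hu. replace u with 0 by lra. reflexivity. }
assert (Eb : bound E).
{ exists 1. intros t [Ht _]. lra. }
destruct (completeness E Eb (ex_intro _ 0 E0)) as [s [Hub Hlub]].
assert (s0 : 0 <= s) by (apply Hub; exact E0).
assert (s1 : s <= 1) by (apply Hlub; intros t [Ht _]; lra).
destruct (Hloc s (conj s0 s1)) as [e [e0 He]].
assert (Ht : exists t, E t /\ s - e < t).
{ destruct (classic (exists t, E t /\ s - e < t)) as [H|H]; [exact H|].
  exfalso. assert (s <= s - e); [|lra].
  apply Hlub. intros t Et. destruct (Rle_or_lt t (s - e)) as [h|h]; [exact h|].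
  exfalso; apply H; exists t; split; assumption. }
destruct Ht as [t [Et Hts]].
assert (ts : t <= s) by (apply Hub; exact Et).
assert (Is : I s = I 0).
{ rewrite <- (He t).
  - destruct Et as [Et1 Et2]. apply Et2. destruct Et1; lra.
  - destruct Et as [Et1 _]; lra.
  - apply Rabs_def1; lra. }
destruct (Rle_or_lt (s + e / 2) 1) as [h|h].
- exfalso.
  assert (E (s + e / 2)).
  { split; [lra|]. intros u Hu.
    destruct (Rle_or_lt u t) as [hu|hu].
    + destruct Et as [_ Et2]. apply Et2; lra.
    + rewrite (He u); [exact Is|lra|]. apply Rabs_def1; lra. }
  assert (s + e / 2 <= s) by (apply Hub; assumption). lra.
- rewrite (He 1); [exact Is|lra|]. apply Rabs_def1; lra.
Qed.

End LocConst.

Section Contr.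
Context {d : Order.disp_t} {T : finPOrderType d}.
Local Open Scope order_scope.

Definition izero : int := 0%R.

Lemma fin_eps (S : {set T}) (P : T -> R -> Prop) :
  (forall s e e', Rlt R0 e' -> Rle e' e -> P s e -> P s e') ->
  (forall s, s \in S -> exists e, Rlt R0 e /\ P s e) ->
  exists e, Rlt R0 e /\ forall s, s \in S -> P s e.
Proof.
move=> Pmon HS.
suff: forall l : seq T, (forall s, s \in l -> exists e, Rlt R0 e /\ P s e) ->
  exists e, Rlt R0 e /\ forall s, s \in l -> P s e.
  move=> /(_ (enum S)) []; first by move=> s; rewrite mem_enum; apply: HS.
  by move=> e [e0 He]; exists e; split=> // s sS; apply: He; rewrite mem_enum.
elim=> [|x l IH] Hl.
  by exists R1; split; [apply: Rlt_0_1 | move=> s].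
case: IH => [s sl|e2 [e20 He2]]; first by apply: Hl; rewrite in_cons sl orbT.
case: (Hl x (mem_head _ _)) => e1 [e10 He1].
exists (Rmin e1 e2); split; first by apply: Rmin_pos.
move=> s; rewrite in_cons => /orP[/eqP->|sl].
  by apply: (Pmon _ e1); [apply: Rmin_pos | apply: Rmin_l | ].
by apply: (Pmon _ e2); [apply: Rmin_pos | apply: Rmin_r | apply: He2].
Qed.

Lemma contractible_ee (S : {set T}) : contractible S -> ee S = izero.
Proof.
case=> y0 [H [y0S [HS [Hc [H0 H1]]]]].
have h0 : forall t e, Rlt R0 e -> Rlt (Rabs (Rminus t t)) e.
  by move=> t e e0; rewrite Rminus_diag_eq // Rabs_R0.
have mono : forall t, Rle R0 t /\ Rle t R1 -> okmap S (H t).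
  move=> t ht; split; first by move=> s sS; apply: HS.
  move=> a b aS bS ab.
  pose V := [set z in S | z <= H t b].
  have oV : openIn S V.
    split; first by apply/subsetP => z; rewrite inE => /andP[].
    move=> x y yS; rewrite !inE => /andP[_ xle] yx; rewrite yS; exact: le_trans yx xle.
  case: (Hc V oV t b ht bS) => [|e [e0 He]]; first by rewrite inE HS ?lexx.
  by move: (He t a ht (h0 t e e0) aS ab); rewrite inE => /andP[].
have loc : forall t, Rle R0 t /\ Rle t R1 -> exists e, Rlt R0 e /\
     forall t', Rle R0 t' /\ Rle t' R1 -> Rlt (Rabs (Rminus t' t)) e ->
       ee (fixS S (H t')) = ee (fixS S (H t)).
  move=> t ht.
  have : exists e, Rlt R0 e /\ forall s, s \in S ->
      (forall t', Rle R0 t' /\ Rle t' R1 -> Rlt (Rabs (Rminus t' t)) e -> H t' s <= H t s).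
    apply: fin_eps.
      by move=> s e e' e'0 e'e Hs t' ht' lt; apply: Hs => //; lra.
    move=> s sS.
    pose V := [set z in S | z <= H t s].
    have oV : openIn S V.
      split; first by apply/subsetP => z; rewrite inE => /andP[].
      move=> x y yS; rewrite !inE => /andP[_ xle] yx; rewrite yS; exact: le_trans yx xle.
    case: (Hc V oV t s ht sS) => [|e [e0 He]]; first by rewrite inE HS ?lexx.
    exists e; split=> // t' ht' lt.
    by move: (He t' s ht' lt sS (lexx s)); rewrite inE => /andP[].
  case=> e [e0 He]; exists e; split=> // t' ht' lt.
  apply: key_le; [exact: mono | exact: mono | move=> s sS; exact: He].
have := @loc_const_01 _ _ loc.
have -> : fixS S (H R0) = S.
  apply/setP => s; rewrite inE; case sS: (s \in S) => //=; by rewrite H0 ?eqxx.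
move=> <-; change (ee (fixS S (H R1)) = izero).
apply: (@ee_cone _ _ _ y0).
  rewrite inE y0S H1 //=.
by move=> y; rewrite inE => /andP[yS]; rewrite H1 // => /eqP->; rewrite lexx.
Qed.

End Contr.

Theorem mainTheorem5 (d : Order.disp_t) (T : finPOrderType d) (x : T) :
  weak_beat_point x ->
  space_det [set: T] = (- space_det ([set: T] :\ x))%R.
Proof.
move=> Hwb.
rewrite !space_det_ee (@ee_delete _ _ [set: T] x) ?inE //.
have -> : (ee (lowr [set: T] x) * ee (uppr [set: T] x) = 0)%R.
  case: Hwb => [Hu|Hf].
    have -> : lowr [set: T] x = hatU x by apply/setP => y; rewrite !inE.
    by rewrite (contractible_ee Hu) mul0r.
  have -> : uppr [set: T] x = hatF x by apply/setP => y; rewrite !inE.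
  by rewrite (contractible_ee Hf) mulr0.
rewrite subr0 [in LHS](cardsD1 x [set: T]) in_setT add1n exprS mulN1r mulNr.
by [].
Qed.
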